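(* Let $FAF=\langle\mathcal A,\rho\rangle$ be a fuzzy argumentation framework and $E\subseteq\mathcal A$. For every $C\subseteq\mathcal A$: $E\in\mathcal{AE}(FAF,C)$ if and only if for every $S\in SCCS_{FAF}$, $$E\cap S\in\mathcal{AE}\big(FAF\downarrow_{R_{FAF}(S,E)},\,D_{FAF}(S,E)\cap C\big).$$
   Context: Fuzzy sets: a fuzzy set on a crisp set $X$ is a map $S:X\to[0,1]$; $S\subseteq S'$ means $S(x)\le S'(x)$ for all $x$; $\cap,\cup$ are pointwise $\min,\max$; $\mathrm{Supp}(S)=\{x:S(x)>0\}$. A fuzzy point $(x,a)$, $a\in(0,1]$, has value $a$ at $x$ and $0$ elsewhere; $(x,a)\in S$ means $a\le S(x)$. $a*b=\min\{a,b\}$. A fuzzy argumentation framework (FAF) is $\langle\mathcal A,\rho\rangle$ with $\mathrm{Args}$ a crisp set, $\mathcal A$ a fuzzy set on $\mathrm{Args}$, $\rho:\mathrm{Args}\times\mathrm{Args}\to[0,1]$, $\rho_{AB}=\rho(A,B)$; $A$ attacks $B$ iff $\rho_{AB}>0$. Fuzzy arguments are fuzzy points $(A,a)\in\mathcal A$. An attack of $(A,a)$ on $(B,b)$ is tolerable if $\min\{a,\rho_{AB}\}+b\le1$, sufficient otherwise. $(A,a)$ weakens $(B,b)$ to $(B,b')$, $b'=\min\{1-\min\{a,\rho_{AB}\},b\}$. $T\subseteq\mathcal A$ weakening defends $(C,c)$ if for every fuzzy argument $(B,b)$ sufficiently attacking $(C,c)$ there is $(A',a')\in T$ weakening $(B,b)$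 to some $(B,b')$ which tolerably attacks $(C,c)$. $T$ is conflict-free if no $(A,a),(B,b)\in T$ with $(A,a)$ sufficiently attacking $(B,b)$; admissible if conflict-free and it weakening defends every element of $T$. For $C\subseteq\mathcal A$, $\mathcal{AE}(FAF,C)$ is the set of admissible $E$ with $E\subseteq C$. Path-equivalence on $\mathrm{Args}$: $A\sim B$ iff $A=B$ or there are chains of attacks from $A$ to $B$ and from $B$ to $A$. $SCC_{FAF}(A)$ is the fuzzy set with value $\mathcal A(B)$ at each $B\sim A$, $0$ elsewhere; $SCCS_{FAF}$ is the set of these strongly connected components. $outparents_{FAF}(S)$ is the fuzzy set of $(B,\mathcal A(B))$ with $B\notin\mathrm{Supp}(S)$ attacking some argument of $\mathrm{Supp}(S)$. For $T\subseteq\mathcal A$, $FAF\downarrow_T=\langle T,\rho|_{\mathrm{Supp}(T)\times\mathrm{Supp}(T)}\rangle$, and notions in $FAF\downarrow_T$ refer to its own fuzzy arguments and attacks. For $E\subseteq\mathcal A$, $S\in SCCS_{FAF}$: $L_{FAF}(S,E)(A)=\max_B\big((E\cap outparents_{FAF}(S))(B)*\rho_{BA}\big)$ for $A\in\mathrm{Supp}(S)$, $0$ elsewhere; $R_{FAF}(S,E)(A)=\min\{\mathcal A(A),1-L_{FAF}(S,E)(A)\}$ for $A\in\mathrm{Supp}(S)$, $0$ elsewhere; $D_{FAF}(S,E)$ is the union of fuzzy points $(A,a)\in R_{FAF}(S,E)$ such that for every $(B,b)\in outparents_{FAF}(S)$ sufficiently attacking $(A,a)$ there is $(C,c)\in E$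 weakening $(B,b)$ to some $(B,b')$ which tolerably attacks $(A,a)$. *)

(* Defs.v *)
From HB Require Import structures.
From mathcomp Require Import all_boot all_order all_algebra.
From mathcomp Require Import boolp classical_sets reals.
Set Implicit Arguments. Unset Strict Implicit. Unset Printing Implicit Defensive.
Import Order.TTheory GRing.Theory Num.Theory.
Local Open Scope ring_scope.
Local Open Scope classical_set_scope.

(* A fuzzy argumentation framework <A, rho> over the crisp set Args. *)
Record faf (R : realType) (Args : finType) := FAF {
  fargs : Args -> R;
  fatt : Args -> Args -> R
}.

Section FAFDefs.
Variables (R : realType) (Args : finType).
Implicit Types (S T E C : Args -> R) (F : faf R Args).

Definition is_fuzzy S := forall x, 0 <= S x <= 1.
Definition fsubset S S' := forall x, S x <= S' x.
Definition fcap S S' : Args -> R := fun x => Num.min (S x) (S' x).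
Definition fpoint_in S (x : Args) (a : R) := (0 < a <= 1) /\ a <= S x.

Definition suff_att (rho : Args -> Args -> R) x a y b :=
  0 < rho x y /\ 1 < Num.min a (rho x y) + b.
Definition tol_att (rho : Args -> Args -> R) x a y b :=
  0 < rho x y /\ Num.min a (rho x y) + b <= 1.
Definition weaken (rho : Args -> Args -> R) z c x b : R :=
  Num.min (1 - Num.min c (rho z x)) b.

Definition weak_defends F T y c :=
  forall x b, fpoint_in (fargs F) x b -> suff_att (fatt F) x b y c ->
    exists z a, fpoint_in T z a /\ tol_att (fatt F) x (weaken (fatt F) z a x b) y c.

Definition conflict_free F T :=
  ~ (exists x a y b, [/\ fpoint_in T x a, fpoint_in T y b & suff_att (fatt F) x a y b]).

Definition admissible F T :=
  [/\ fsubset T (fargs F), conflict_free F T &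
      forall y c, fpoint_in T y c -> weak_defends F T y c].

Definition AE F C E := admissible F E /\ fsubset E C.

Definition attacks F : rel Args := fun x y => 0 < fatt F x y.

Definition path_equiv F (x y : Args) : bool :=
  connect (attacks F) x y && connect (attacks F) y x.

Definition SCC F (x : Args) : Args -> R :=
  fun y => if path_equiv F x y then fargs F y else 0.

Definition outparents F S : Args -> R :=
  fun y => if ~~ (0 < S y) && [exists z, (0 < S z) && attacks F y z]
           then fargs F y else 0.

Definition Lfun F S E : Args -> R :=
  fun x => if 0 < S x then
             \big[Num.max/0]_(y : Args) Num.min (fcap E (outparents F S) y) (fatt F y x)
           else 0.

Definition Rfun F S E : Args -> R :=
  fun x => if 0 < S x then Num.min (fargs F x) (1 - Lfun F S E x) else 0.

Definition D_point F S E (x : Args) (a : R) :=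
  fpoint_in (Rfun F S E) x a /\
  forall y b, fpoint_in (outparents F S) y b -> suff_att (fatt F) y b x a ->
    exists z c, fpoint_in E z c /\ tol_att (fatt F) y (weaken (fatt F) z c y b) x a.

(* D_F(S,E): the union of those fuzzy points (sup of the empty set is 0) *)
Definition Dfun F S E : Args -> R :=
  fun x => sup [set a | D_point F S E x a].

Definition restrict F T : faf R Args :=
  FAF T (fun x y => if (0 < T x) && (0 < T y) then fatt F x y else 0).

End FAFDefs.

(* Main.v *)
Require Import Defs.
From HB Require Import structures.
From mathcomp Require Import all_boot all_order all_algebra.
From mathcomp Require Import boolp classical_sets reals.
From mathcomp Require Import lra.
Import Order.TTheory GRing.Theory Num.Theory.
Local Open Scope ring_scope.
Set Implicit Arguments. Unset Strict Implicit.

Lemma min_cases {R : realType} (a b : R) :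
  [/\ Num.min a b <= a, Num.min a b <= b & Num.min a b = a \/ Num.min a b = b].
Proof.
split; [by rewrite ge_min lexx | by rewrite ge_min lexx orbT |].
by case: (leP a b) => h; [left|right].
Qed.
Ltac gen_min := repeat match goal with
 | |- context [Num.min ?a ?b] =>
   let m := fresh "m" in let h1 := fresh "hm" in let h2 := fresh "hm" in let h3 := fresh "hm" in
   have [h1 h2 h3] := min_cases a b;
   move: h1 h2 h3; set m := Num.min a b; clearbody m; move=> h1 h2 h3
 | H : context [Num.min ?a ?b] |- _ => move: H
end; intros.

Section Arith.
Context {R : realType}.
Implicit Types a b c e o r s t m L : R.

Lemma ar1 e o r f : r <= 1 -> f <= 1 -> 1 - f < Num.min (Num.min e o) r ->
  [/\ 0 < r, 0 < e, 0 < f & 1 < Num.min e r + f].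
Proof. (move=> *; gen_min; split; lra). Qed.

Lemma ar2 a b c r s : b <= 1 -> 0 < a -> 0 <= r -> 1 < Num.min b s + c ->
  Num.min (Num.min (1 - Num.min a r) b) s + c <= 1 -> 0 < r.
Proof. (move=> *; gen_min; lra). Qed.

Lemma ar3 a b c r s t e o : 1 < Num.min b s + c ->
  Num.min (Num.min (1 - Num.min a r) b) s + c <= 1 -> b <= 1 - t ->
  Num.min (Num.min e o) r <= t -> a <= e -> a <= o -> False.
Proof. (move=> *; gen_min; lra). Qed.

Lemma ar4 a b r e o L : 1 < Num.min a r + b -> a <= e -> a <= o ->
  Num.min (Num.min e o) r <= L -> b <= 1 - L -> False.
Proof. (move=> *; gen_min; lra). Qed.

Lemma ar5 e o b c r s : 
  1 < Num.min (Num.min (1 - Num.min e r) b) s + c -> Num.min (Num.min e o) r < c.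
Proof. (move=> *; gen_min; lra). Qed.

Lemma ar6 L b c r : L < c -> 1 < Num.min b r + c -> c <= 1 ->
  1 < Num.min (Num.min (1 - L) b) r + c /\ 0 < Num.min (1 - L) b.
Proof. (move=> *; gen_min; split; lra). Qed.

Lemma ar7 m b b' c r : b' <= b -> 1 < Num.min b' r + c ->
  Num.min (Num.min (1 - m) b') r + c <= 1 ->
  Num.min (Num.min (1 - m) b) r + c <= 1.
Proof. (move=> *; gen_min; lra). Qed.

Lemma minmono x y b : x <= y -> Num.min x b <= Num.min y b.
Proof. move=> *; gen_min; lra. Qed.

Lemma ar8 a e r b s : a <= e ->
  Num.min (Num.min (1 - Num.min e r) b) s <= Num.min (Num.min (1 - Num.min a r) b) s.
Proof.
move=> h; apply: minmono; apply: minmono.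
have : Num.min a r <= Num.min e r by apply: minmono.
lra.
Qed.

Lemma ar9 m b r c : 0 < c -> 1 - c < m -> 1 < Num.min b r + c ->
  exists c', [/\ 0 < c', c' < c, 1 - m < c' & 1 < Num.min b r + c'].
Proof.
move=> h1 h2; set u := Num.min b r; clearbody u => h3.
set d := Num.min (Num.min (m - (1 - c)) (u - (1 - c))) c.
have [hd hd1 hd2 hd3] : [/\ 0 < d, d <= m - (1 - c), d <= u - (1 - c) & d <= c].
  by rewrite /d; gen_min; split; lra.
exists (c - d / 2); split; lra.
Qed.

Lemma ar10 e o r f : 0 <= f -> f <= 1 -> r <= 1 -> 
  (Num.min (Num.min e o) r) <= 1 - f \/ 1 - f < Num.min (Num.min e o) r.
Proof. move=> *; case: (leP (Num.min (Num.min e o) r) (1 - f)); by [left|right]. Qed.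
End Arith.



Section Main.
Variables (R : realType) (Args : finType) (F : faf R Args).
Hypothesis HA : is_fuzzy (fargs F).
Hypothesis Hrho : forall x y, 0 <= fatt F x y <= 1.
Variable E : Args -> R.
Hypothesis HE : is_fuzzy E.
Hypothesis HEA : fsubset E (fargs F).

Lemma A0 y : 0 <= fargs F y. Proof. by case/andP: (HA y). Qed.
Lemma A1 y : fargs F y <= 1. Proof. by case/andP: (HA y). Qed.
Lemma r0 x y : 0 <= fatt F x y. Proof. by case/andP: (Hrho x y). Qed.
Lemma r1 x y : fatt F x y <= 1. Proof. by case/andP: (Hrho x y). Qed.
Lemma E0 y : 0 <= E y. Proof. by case/andP: (HE y). Qed.
Lemma E1 y : E y <= 1. Proof. by case/andP: (HE y). Qed.

Lemma SCC_pos x y : 0 < SCC F x y -> SCC F x y = fargs F y.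
Proof. by rewrite /SCC; case: ifP => //; rewrite ltxx. Qed.
Lemma SCC_npos x y : ~~ (0 < SCC F x y) -> SCC F x y = 0.
Proof.
rewrite /SCC; case: ifP => // _ h.
have := A0 y; rewrite le_eqVlt => /orP[/eqP<-//|h'].
by rewrite h' in h.
Qed.
Lemma SCC_self y : SCC F y y = fargs F y.
Proof. by rewrite /SCC /path_equiv connect0. Qed.

Lemma Rfun_le_A S y : Rfun F S E y <= fargs F y.
Proof. rewrite /Rfun; case: ifP => _; [by rewrite ge_min lexx | exact: A0]. Qed.
Lemma Rfun_pos S y : 0 < Rfun F S E y -> 0 < S y.
Proof. by rewrite /Rfun; case: ifP => //; rewrite ltxx. Qed.
Lemma Rfun_eq S y : 0 < S y -> Rfun F S E y = Num.min (fargs F y) (1 - Lfun F S E y).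
Proof. by rewrite /Rfun => ->. Qed.

Definition term S y w := Num.min (fcap E (outparents F S) w) (fatt F w y).

Lemma L_ge_term S y w : 0 < S y -> term S y w <= Lfun F S E y.
Proof. move=> h; rewrite /Lfun h. exact: (le_bigmax 0 (fun w => term S y w) w). Qed.
Lemma L_le S y t : 0 <= t -> (forall w, term S y w <= t) -> Lfun F S E y <= t.
Proof. move=> h0 h; rewrite /Lfun; case: ifP => _ //; apply: bigmax_le => // i _; exact: h. Qed.
Lemma L_lt S y t : 0 < t -> (forall w, term S y w < t) -> Lfun F S E y < t.
Proof. move=> h0 h; rewrite /Lfun; case: ifP => _ //; apply: bigmax_lt => // i _; exact: h. Qed.

Lemma outp_eq S w y : ~~ (0 < S w) -> 0 < S y -> 0 < fatt F w y ->
  outparents F S w = fargs F w.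
Proof.
move=> h1 h2 h3; rewrite /outparents h1 /=; case: ifP => // /negbT/negP; case.
by apply/existsP; exists y; rewrite h2 /attacks h3.
Qed.
Lemma outp_le S w : outparents F S w <= fargs F w.
Proof. by rewrite /outparents; case: ifP => _; [exact: lexx | exact: A0]. Qed.

Lemma rres T u v : 0 < T u -> 0 < T v -> fatt (restrict F T) u v = fatt F u v.
Proof. by move=> h1 h2; rewrite /= h1 h2. Qed.
Lemma rres_pos T u v : 0 < fatt (restrict F T) u v ->
  [/\ 0 < T u, 0 < T v & fatt (restrict F T) u v = fatt F u v].
Proof. by rewrite /=; case: ifP => [/andP[h1 h2] _|]; [rewrite h1 h2 | rewrite ltxx]. Qed.

Lemma fcap_le1 (S T : Args -> R) y : fcap S T y <= S y.
Proof. by rewrite /fcap ge_min lexx. Qed.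
Lemma fcap_le2 (S T : Args -> R) y : fcap S T y <= T y.
Proof. by rewrite /fcap ge_min lexx orbT. Qed.

Lemma Es_self x y : 0 < SCC F x y -> fcap E (SCC F x) y = E y.
Proof. by move=> h; rewrite /fcap (SCC_pos h); apply/min_idPl/HEA. Qed.

Lemma D_down S y a a' : D_point F S E y a -> 0 < a' -> a' <= a -> D_point F S E y a'.
Proof.
move=> [[/andP[ha0 ha1] haR] hD] ha' hle; split.
  split; last exact: le_trans hle haR.
  by rewrite ha' /=; exact: le_trans hle ha1.
move=> w b hw [hr hs].
have [|z [c [hz [ht1 ht2]]]] := hD w b hw; first by split => //; lra.
by exists z, c; split => //; split => //; lra.
Qed.

Lemma Dset_ub S y : has_ubound [set a | D_point F S E y a].
Proof. by exists 1 => a [[/andP[_ h] _] _]. Qed.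

Lemma D_ge0 S y : 0 <= Dfun F S E y.
Proof.
rewrite /Dfun; have [[a ha]|hn] := pselect (exists a, D_point F S E y a).
  apply: le_trans (ub_le_sup (Dset_ub S y) ha).
  by case: ha => [[/andP[h _] _] _]; exact: ltW.
rewrite sup_out // => -[[a ha] _]; apply: hn; by exists a.
Qed.


Lemma EsS y : fcap E (SCC F y) y = E y.
Proof. by rewrite /fcap SCC_self; apply/min_idPl/HEA. Qed.

Lemma fwd C : AE F C E -> forall x,
  AE (restrict F (Rfun F (SCC F x) E)) (fcap (Dfun F (SCC F x) E) C) (fcap E (SCC F x)).
Proof.
move=> [[_ cf def] sub] x.
have ES_R : forall y, fcap E (SCC F x) y <= Rfun F (SCC F x) E y.
  move=> y; case: (boolP (0 < SCC F x y)) => hy.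
    apply: le_trans (fcap_le1 _ _ _) _; rewrite (Rfun_eq hy) le_min HEA /=.
    suff : Lfun F (SCC F x) E y <= 1 - E y by move=> *; lra.
    apply: L_le; first by have := E1 y; lra.
    move=> w; rewrite /term /fcap.
    have [//|hlt] := ar10 (E w) (outparents F (SCC F x) w) (E0 y) (E1 y) (r1 w y).
    have [hr he hf hs] := ar1 (r1 w y) (E1 y) hlt.
    exfalso; apply: cf; exists w, (E w), y, (E y); split.
    - by split; [rewrite he E1 | exact: lexx].
    - by split; [rewrite hf E1 | exact: lexx].
    - by split.
  rewrite /fcap /Rfun (negbTE hy) (SCC_npos hy).
  by rewrite ge_min lexx orbT.
have cfS : conflict_free (restrict F (Rfun F (SCC F x) E)) (fcap E (SCC F x)).
  move=> [u [a [v [b [[ha hua] [hb hvb] [hr hs]]]]]].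
  have [_ _ he] := rres_pos hr.
  rewrite he in hr hs.
  apply: cf; exists u, a, v, b; split => //.
  - by split => //; apply: le_trans hua (fcap_le1 _ _ _).
  - by split => //; apply: le_trans hvb (fcap_le1 _ _ _).
have defS : forall y c, fpoint_in (fcap E (SCC F x)) y c ->
   weak_defends (restrict F (Rfun F (SCC F x) E)) (fcap E (SCC F x)) y c.
  move=> y c [hc hcy] w b [hb hbw] [hr hs].
  have [hRw hRy he] := rres_pos hr.
  rewrite he in hr hs.
  have hbA : b <= fargs F w by apply: le_trans hbw (Rfun_le_A _ _).
  have [z [a [[ha haz] [ht1 ht2]]]] :=
    def y c (conj hc (le_trans hcy (fcap_le1 _ _ _))) w b (conj hb hbA) (conj hr hs).
  case: (boolP (0 < SCC F x z)) => hz.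
    exists z, a; split.
      by split => //; rewrite (Es_self hz).
    have hRz : 0 < Rfun F (SCC F x) E z.
      apply: lt_le_trans (ES_R z); rewrite (Es_self hz).
      case/andP: ha => ha0 _; exact: lt_le_trans ha0 haz.
    by rewrite /tol_att /weaken (rres hRz hRw) (rres hRw hRy).
  exfalso.
  have hSw : 0 < SCC F x w := Rfun_pos hRw.
  case/andP: hb => hb0 hb1; case/andP: ha => ha0 ha1.
  have hrz := ar2 hb1 ha0 (r0 z w) hs ht2.
  have ho := outp_eq hz hSw hrz.
  have hbL : b <= 1 - Lfun F (SCC F x) E w.
    apply: le_trans hbw _; rewrite /= (Rfun_eq hSw) ge_min lexx orbT //.
  apply: (ar3 hs ht2 hbL (L_ge_term z hSw)) => //.
  by rewrite ho; apply: le_trans haz (HEA z).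
have ES_DC : fsubset (fcap E (SCC F x)) (fcap (Dfun F (SCC F x) E) C).
  move=> y; rewrite {2}/fcap le_min; apply/andP; split; last first.
    exact: le_trans (fcap_le1 _ _ _) (sub y).
  have [hp|hn] := ltP 0 (fcap E (SCC F x) y); last exact: le_trans hn (D_ge0 _ _).
  apply: (ub_le_sup (Dset_ub _ _)).
  split.
    split; [by rewrite hp /= (le_trans (fcap_le1 _ _ _) (E1 y)) | exact: ES_R].
  move=> w b [hb hbo] hsa.
  apply: def => //.
    by split; [rewrite hp (le_trans (fcap_le1 _ _ _) (E1 y)) | exact: fcap_le1].
  split => //; exact: le_trans hbo (outp_le _ _).
by split; [split; [exact: ES_R | exact: cfS | exact: defS] | exact: ES_DC].
Qed.


Lemma bwd C : (forall x, AE (restrict F (Rfun F (SCC F x) E))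
  (fcap (Dfun F (SCC F x) E) C) (fcap E (SCC F x))) -> AE F C E.
Proof.
move=> H.
have Hy : forall y, 0 < E y -> 0 < SCC F y y.
  by move=> y h; rewrite SCC_self; exact: lt_le_trans h (HEA y).
have HR : forall y u, fcap E (SCC F y) u <= Rfun F (SCC F y) E u.
  by move=> y u; have [[subR _ _] _] := H y; exact: subR.
split; last first.
  move=> y; have [_ sub] := H y; rewrite -EsS.
  exact: le_trans (sub y) (fcap_le2 _ _ _).
split => //.
- move=> [w [a [y [b [[ha hwa] [hb hyb] [hr hs]]]]]].
  have [[_ cfS _] _] := H y.
  case/andP: ha => ha0 ha1; case/andP: hb => hb0 hb1.
  have hy0 : 0 < E y by exact: lt_le_trans hb0 hyb.
  have hSy := Hy y hy0.
  have hEy : E y <= Rfun F (SCC F y) E y by rewrite -{1}EsS; exact: HR.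
  case: (boolP (0 < SCC F y w)) => hw.
    have hRw : 0 < Rfun F (SCC F y) E w.
      have := HR y w; rewrite (Es_self hw) => h.
      exact: lt_le_trans ha0 (le_trans hwa h).
    have hRy : 0 < Rfun F (SCC F y) E y by exact: lt_le_trans hy0 hEy.
    apply: cfS; exists w, a, y, b; split.
    + by split; [rewrite ha0 ha1 | rewrite (Es_self hw)].
    + by split; [rewrite hb0 hb1 | rewrite EsS].
    + by rewrite /suff_att (rres hRw hRy).
  have ho := outp_eq hw hSy hr.
  apply: (ar4 hs hwa _ (L_ge_term w hSy)).
    by rewrite ho; exact: le_trans hwa (HEA w).
  apply: le_trans hyb (le_trans hEy _).
  by rewrite (Rfun_eq hSy) ge_min lexx orbT.
- move=> y c [hc hcy] w b [hb hbw] [hr hs].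
  have [[subR cfS defS] subD] := H y.
  case/andP: (hc) => hc0 hc1; case/andP: (hb) => hb0 hb1.
  have hy0 : 0 < E y by exact: lt_le_trans hc0 hcy.
  have hSy := Hy y hy0.
  have hEy : E y <= Rfun F (SCC F y) E y by rewrite -{1}EsS; exact: HR.
  have hRy : 0 < Rfun F (SCC F y) E y by exact: lt_le_trans hy0 hEy.
  case: (boolP (0 < SCC F y w)) => hw.
    have [[z [hz htol]]|hno] := pselect (exists z, 0 < E z /\
        tol_att (fatt F) w (weaken (fatt F) z (E z) w b) y c).
      by exists z, (E z); split => //; split => //; rewrite hz E1.
    have hLt : Lfun F (SCC F y) E w < c.
      apply: L_lt => // z; case: (ltP 0 (E z)) => hz.
        have hsz : 1 < Num.min (weaken (fatt F) z (E z) w b) (fatt F w y) + c.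
          rewrite ltNge; apply/negP => hle; apply: hno; exists z; split => //.
        exact: ar5 hsz.
      have : term (SCC F y) w z <= E z by rewrite /term /fcap !ge_min lexx.
      move=> *; lra.
    have [hsb hb'] := ar6 hLt hs hc1.
    set b' := Num.min (1 - Lfun F (SCC F y) E w) b in hsb hb'.
    have hb'b : b' <= b by rewrite /b' ge_min lexx orbT.
    have hRw' : b' <= Rfun F (SCC F y) E w.
      rewrite (Rfun_eq hw) le_min (le_trans hb'b hbw) /=.
      by rewrite /b' ge_min lexx.
    have hRw : 0 < Rfun F (SCC F y) E w := lt_le_trans hb' hRw'.
    have hb'1 : b' <= 1 by exact: le_trans hb'b hb1.
    have hsr : suff_att (fatt (restrict F (Rfun F (SCC F y) E))) w b' y c.
      by rewrite /suff_att (rres hRw hRy).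
    have hyc : fpoint_in (fcap E (SCC F y)) y c by split => //; rewrite EsS.
    have [z [a [[ha haz] [ht1 ht2]]]] :=
      defS y c hyc w b' (conj (introT andP (conj hb' hb'1)) hRw') hsr.
    have hRz : 0 < Rfun F (SCC F y) E z.
      case/andP: ha => ha0 _; exact: lt_le_trans ha0 (le_trans haz (HR y z)).
    rewrite /weaken (rres hRz hRw) (rres hRw hRy) in ht2.
    exists z, a; split.
      by split => //; exact: le_trans haz (fcap_le1 _ _ _).
    by split => //; exact: ar7 hb'b hsb ht2.
  have ho := outp_eq hw hSy hr.
  have hcD : c <= Dfun F (SCC F y) E y.
    have := subD y; rewrite EsS => h.
    exact: le_trans hcy (le_trans h (fcap_le1 _ _ _)).
  apply: contrapT => hno.
  pose f := fun z => Num.min (weaken (fatt F) z (E z) w b) (fatt F w y).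
  pose m := \big[Num.min/1]_(z | 0 < E z) f z.
  have hm : 1 - c < m.
    apply: lt_bigmin; first by lra.
    move=> z hz; rewrite ltNge; apply/negP => hle; apply: hno.
    exists z, (E z); split; first by split => //; rewrite hz E1.
    by split => //; rewrite /f in hle; lra.
  have [c' [hc'0 hc'c hc'm hc's]] := ar9 hc0 hm hs.
  have [ne|nne] := pselect (exists a, D_point F (SCC F y) E y a); last first.
    move: hcD; rewrite /Dfun sup_out; first by lra.
    by move=> [[a ha] _]; apply: nne; exists a.
  have [a0 ha0 hlt] := sup_gt ne (lt_le_trans hc'c hcD).
  have [_ hD] := D_down ha0 hc'0 (ltW hlt).
  have hwb : fpoint_in (outparents F (SCC F y)) w b by split => //; rewrite ho.
  have [z [a [[ha haz] [ht1 ht2]]]] := hD w b hwb (conj hr hc's).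
  have hz : 0 < E z by case/andP: ha => ha0' _; exact: lt_le_trans ha0' haz.
  have hmf : m <= f z by exact: bigmin_le_cond.
  have hfz := ar8 (fatt F z w) b (fatt F w y) haz.
  rewrite /f /weaken in hmf hfz; rewrite /weaken in ht2.
  lra.
Qed.

End Main.

Theorem mainTheorem3 (R : realType) (Args : finType) (F : faf R Args)
  (HA : is_fuzzy (fargs F))
  (Hrho : forall x y, 0 <= fatt F x y <= 1)
  (E : Args -> R) (HE : is_fuzzy E) (HEA : fsubset E (fargs F)) :
  forall C : Args -> R, is_fuzzy C -> fsubset C (fargs F) ->
    (AE F C E <->
     forall x : Args,
       AE (restrict F (Rfun F (SCC F x) E))
          (fcap (Dfun F (SCC F x) E) C)
          (fcap E (SCC F x))).
Proof.
move=> C _ _; split.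
  by apply: fwd.
by apply: bwd.
Qed.
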